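(* Let $G$ be a commutative group, $G'$ a subgroup of $G$, and $U\subset G'$ a finite set. Then $\beta(U,G)=\beta(U,G')$.
   Context: For a finite set $U$ in a commutative group $K$, $\beta(U,K)=\inf_{A,B}\frac{|A+B+U|}{\sqrt{|A||B|}}$, where the infimum is over all nonempty finite $A,B\subset K$ (so the ambient group over which $A,B$ range is indicated). *)

(* Defs.v *)
From HB Require Import structures.
From mathcomp Require Import all_boot all_order all_algebra.
From mathcomp Require Import finmap.
From mathcomp Require Import boolp classical_sets reals.
Set Implicit Arguments.
Unset Strict Implicit.
Unset Printing Implicit Defensive.
Import Order.TTheory GRing.Theory Num.Theory.
Local Open Scope fset_scope.
Local Open Scope ring_scope.
Local Open Scope classical_set_scope.

Definition sumset (K : zmodType) (A B : {fset K}) : {fset K} :=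
  [fset a + b | a in A, b in B].

Definition beta_ratios (R : realType) (K : zmodType) (U : {fset K}) : set R :=
  [set r | exists A B : {fset K},
      [/\ A != fset0, B != fset0 &
          r = (#|` sumset (sumset A B) U|)%:R
              / Num.sqrt ((#|` A|)%:R * (#|` B|)%:R)]].

Definition beta (R : realType) (K : zmodType) (U : {fset K}) : R :=
  inf (@beta_ratios R K U).
Arguments beta R {K} U.

(* Main.v *)
Require Import Defs.
From HB Require Import structures.
From mathcomp Require Import all_boot all_order all_algebra.
From mathcomp Require Import finmap.
From mathcomp Require Import boolp classical_sets reals.
From mathcomp Require Import ring lra zify.
Import Order.TTheory GRing.Theory Num.Theory.
Local Open Scope fset_scope.
Local Open Scope ring_scope.

Lemma I1 (G : zmodType) (p a c d b : G) : p + a + c + d - (p + b) = (a + d) + (c - b).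
Proof.
by rewrite [p + a]addrC [a + p + c]addrAC [a + c + p + d]addrAC addrKA [a + c + d]addrAC !addrA.
Qed.

Lemma I3 (G : zmodType) (p a c d e : G) : (p + a) + (c + d) + e = (p + c) + (a + d + e).
Proof. by rewrite addrACA !addrA. Qed.

Lemma sumsetP (K : zmodType) (A B : {fset K}) z :
  reflect (exists2 a, a \in A & exists2 b, b \in B & z = a + b) (z \in sumset A B).
Proof. exact: imfset2P. Qed.

Lemma mem_sumset (K : zmodType) (A B : {fset K}) a b :
  a \in A -> b \in B -> a + b \in sumset A B.
Proof. move=> aA bB; exact: (in_imfset2 _ (fun a b => a + b) aA bB). Qed.

Lemma sumsetC (K : zmodType) (A B : {fset K}) : sumset A B = sumset B A.
Proof.
apply/fsetP=> z; apply/sumsetP/sumsetP=> -[a aA [b bB ->]]; exists b => //;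
  exists a => //; exact: addrC.
Qed.

Lemma sumsetS (K : zmodType) (A A' B B' : {fset K}) :
  A `<=` A' -> B `<=` B' -> sumset A B `<=` sumset A' B'.
Proof.
move=> /fsubsetP sA /fsubsetP sB; apply/fsubsetP=> z /sumsetP[a aA [b bB ->]].
by apply: mem_sumset; [apply: sA | apply: sB].
Qed.

Lemma cardU_disj (K : choiceType) (A B : {fset K}) :
  A `&` B = fset0 -> #|` A `|` B| = (#|` A| + #|` B|)%N.
Proof. by move=> h; rewrite -cardfsUI h cardfs0 addn0. Qed.

Lemma exists_max (T : choiceType) (g : T -> nat) (X : {fset T}) :
  X != fset0 -> exists2 a, a \in X & forall x, x \in X -> (g x <= g a)%N.
Proof.
elim/fset1U_rect: X => [|x X xX IH _]; first by rewrite eqxx.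
have [/eqP ->|/IH [a aX ha]] := boolP ((X : {fset T}) == fset0).
  by exists x; [exact: fset1U1 | move=> y /fset1UP [->|]; rewrite ?inE].
have [le|lt] := leqP (g x) (g a).
  exists a; first by rewrite fset1Ur.
  by move=> y /fset1UP [->|/ha].
exists x; first exact: fset1U1.
move=> y /fset1UP [->//|/ha h]; exact: (leq_trans h (ltnW lt)).
Qed.
Section Main.
Variables (R : realType) (G G' : zmodType) (f : G' -> G).
Hypothesis f_add : forall x y : G', f (x + y) = f x + f y.
Hypothesis f_inj : injective f.
Variable U : {fset G'}.

Let fU := [fset f u | u in U].
Let b' := beta R U.

Lemma f0 : f 0 = 0.
Proof. by apply/(addrI (f 0)); rewrite -f_add !addr0. Qed.

Lemma fB x y : f (x - y) = f x - f y.
Proof. by rewrite -[in f x](subrK y x) f_add addrK. Qed.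

Definition inH (y : G) := exists x, f x = y.

Lemma inH0 : inH 0. Proof. by exists 0; rewrite f0. Qed.

Lemma inHD a b : inH a -> inH b -> inH (a + b).
Proof. by move=> [x <-] [y <-]; exists (x + y); rewrite f_add. Qed.

Lemma inHB a b : inH a -> inH b -> inH (a - b).
Proof. by move=> [x <-] [y <-]; exists (x - y); rewrite fB. Qed.

Lemma ratio_ge0 (K : zmodType) (V : {fset K}) r : @beta_ratios R _ V r -> 0 <= r.
Proof. by move=> [A [B [_ _ ->]]]; rewrite divr_ge0 ?sqrtr_ge0. Qed.

Lemma ratios_n0 (K : zmodType) (V : {fset K}) : (@beta_ratios R _ V !=set0)%classic.
Proof.
exists ((#|` sumset (sumset [fset (0 : K)] [fset 0]) V|)%:R
              / Num.sqrt ((#|` [fset (0:K)]|)%:R * (#|` [fset (0 : K)]|)%:R)).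
by exists [fset 0], [fset 0]; split => //; apply/fset0Pn; exists 0; rewrite inE.
Qed.

Lemma ratios_lb (K : zmodType) (V : {fset K}) : has_lbound (@beta_ratios R _ V).
Proof. by exists 0 => r /ratio_ge0. Qed.

Lemma beta_ge0 : 0 <= b'.
Proof. by apply: lb_le_inf; [exact: ratios_n0 | move=> r /ratio_ge0]. Qed.

Lemma beta_le (A B : {fset G'}) : A != fset0 -> B != fset0 ->
  b' * Num.sqrt ((#|` A|)%:R * (#|` B|)%:R) <= (#|` sumset (sumset A B) U|)%:R.
Proof.
move=> An0 Bn0.
have hA : (0 < #|` A|)%N by rewrite lt0n cardfs_eq0.
have hB : (0 < #|` B|)%N by rewrite lt0n cardfs_eq0.
have sp : 0 < Num.sqrt ((#|` A|)%:R * (#|` B|)%:R :> R).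
  by rewrite sqrtr_gt0 mulr_gt0 // ltr0n.
rewrite -ler_pdivlMr //.
rewrite /b' /beta; apply: (ge_inf (@ratios_lb _ U)).
by exists A, B.
Qed.

Lemma card_shift (P' C' : {fset G'}) (p c : G) :
  #|` sumset (sumset [fset p + f x | x in P'] [fset c + f x | x in C']) fU|
  = #|` sumset (sumset P' C') U|.
Proof.
have -> : sumset (sumset [fset p + f x | x in P'] [fset c + f x | x in C']) fU
   = [fset (p + c) + f z | z in sumset (sumset P' C') U].
  apply/fsetP => z; apply/idP/idP.
    move=> /sumsetP [s /sumsetP [a /imfsetP [x xP ->] [d /imfsetP [y yC ->] ->]]].
    move=> [e /imfsetP [u uU ->] ->].
    apply/imfsetP; exists (x + y + u); first by rewrite !mem_sumset.
    by rewrite !f_add I3.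
  move=> /imfsetP [w /sumsetP [s /sumsetP [x xP [y yC ->]] [u uU ->]] ->].
  rewrite !f_add -I3; apply: mem_sumset; last by apply/imfsetP; exists u.
  by apply: mem_sumset; apply/imfsetP; [exists x | exists y].
rewrite card_imfset //= => x y /addrI; exact: f_inj.
Qed.

Lemma card_tr (P' : {fset G'}) (p : G) : #|` [fset p + f x | x in P']| = #|` P'|.
Proof. by rewrite card_imfset //= => x y /addrI; exact: f_inj. Qed.

Lemma L1 (P' C' : {fset G'}) (p c : G) : P' != fset0 -> C' != fset0 ->
  b' * Num.sqrt ((#|` [fset p + f x | x in P']|)%:R * (#|` [fset c + f x | x in C']|)%:R)
  <= (#|` sumset (sumset [fset p + f x | x in P'] [fset c + f x | x in C']) fU|)%:R.
Proof. by move=> h1 h2; rewrite card_shift !card_tr; exact: beta_le. Qed.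

Lemma coset_rep (X : {fset G}) (c : G) : (forall x, x \in X -> inH (x - c)) ->
  exists X' : {fset G'}, X = [fset c + f x | x in X'].
Proof.
elim/fset1U_rect: X => [|x X xX IH] h.
  by exists fset0; apply/fsetP => z; rewrite inE; apply/esym/negP => /imfsetP [? ].
have [y fy] := h x (fset1U1 _ _).
have [X' ->] : exists X' : {fset G'}, X = [fset c + f x | x in X'].
  by apply: IH => z zX; apply: h; rewrite fset1Ur.
exists (y |` X'); apply/fsetP => z; apply/fset1UP/imfsetP.
  move=> [->|/imfsetP [w wX ->]]; first by exists y; rewrite ?fset1U1 // fy addrC subrK.
  by exists w => //; rewrite fset1Ur.
move=> [w /fset1UP [->|wX] ->]; first by left; rewrite fy addrC subrK.
by right; apply/imfsetP; exists w.
Qed.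

Definition cls (B : {fset G}) (b : G) := [fset x in B | `[< inH (x - b) >]].

Lemma in_cls B b x : (x \in cls B b) = (x \in B) && `[< inH (x - b) >].
Proof. by rewrite !inE. Qed.

Lemma Lind (P' : {fset G'}) (p : G) (m : nat) : P' != fset0 -> (0 < m)%N ->
  forall n (B : {fset G}), (#|` B| <= n)%N ->
  (forall b, b \in B -> (#|` cls B b| <= m)%N) ->
  b' * Num.sqrt (#|` [fset p + f x | x in P']|)%:R * (#|` B|)%:R
  <= Num.sqrt (m%:R) * (#|` sumset (sumset [fset p + f x | x in P'] B) fU|)%:R.
Proof.
move=> P'n0 m0; set P := [fset p + f x | x in P'].
elim=> [|n IH] B.
  rewrite leqn0 cardfs_eq0 => /eqP -> _; rewrite cardfs0 mulr0.
  by rewrite mulr_ge0 ?sqrtr_ge0.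
have [->|/fset0Pn [b bB]] := eqVneq B fset0.
  by move=> _ _; rewrite cardfs0 mulr0 mulr_ge0 ?sqrtr_ge0.
move=> Bn hm.
set C := cls B b; set B' := B `\` C.
have BU : B = C `|` B'.
  apply/fsetP => x; rewrite in_fsetU in_fsetD in_cls.
  by case: (x \in B); rewrite ?andbF ?andbT //= orbN.
have CB'0 : C `&` B' = fset0.
  apply/fsetP => x; rewrite in_fsetI in_fsetD inE.
  by case: (x \in C); rewrite ?andbF.
have cardB : #|` B| = (#|` C| + #|` B'|)%N by rewrite {1}BU cardU_disj.
have bC : b \in C by rewrite in_cls bB subrr; apply/asboolP; exact: inH0.
have SU : sumset (sumset P B) fU = sumset (sumset P C) fU `|` sumset (sumset P B') fU.
  apply/fsetP => z; rewrite in_fsetU; apply/idP/idP.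
    move=> /sumsetP [s /sumsetP [a aP [d dB ->]] [e eU ->]].
    move: dB; rewrite {1}BU in_fsetU => /orP [dC|dB'].
      by apply/orP; left; rewrite !mem_sumset.
    by apply/orP; right; rewrite !mem_sumset.
  move=> /orP [] /sumsetP [s /sumsetP [a aP [d dB ->]] [e eU ->]];
    rewrite !mem_sumset //; rewrite BU in_fsetU dB ?orbT //.
have S0 : sumset (sumset P C) fU `&` sumset (sumset P B') fU = fset0.
  apply/fsetP => z; rewrite in_fsetI inE; apply/negP => /andP [].
  move=> /sumsetP [s /sumsetP [a /imfsetP [x xP ->] [d dC ->]] [e /imfsetP [u uU ->] ->]].
  move=> /sumsetP [s' /sumsetP [a' /imfsetP [x' xP' ea'] [d' dB' ->]] [e' /imfsetP [u' uU' ->] ez]].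
  move: dC; rewrite in_cls => /andP [_ /asboolP hd].
  have hz : inH (p + f x + d + f u - (p + b)).
    by rewrite I1; apply: inHD => //; apply: inHD; [exists x | exists u].
  have dB : d' \in B by move: dB'; rewrite in_fsetD => /andP [].
  move: dB'; rewrite in_fsetD in_cls dB /= andbT => /negP; apply.
  apply/asboolP.
  have e2 : d' - b = (p + f x + d + f u - (p + b)) - (f x' + f u').
    by rewrite ez ea' I1 [_ + (d' - b)]addrC addrK.
  by rewrite e2; apply: inHB => //; apply: inHD; [exists x' | exists u'].
have C1 : (0 < #|` C|)%N by rewrite lt0n cardfs_eq0; apply/fset0Pn; exists b.
have B'lt : (#|` B'| <= n)%N.
  by move: Bn C1; rewrite cardB; lia.
have hm' : forall b1, b1 \in B' -> (#|` cls B' b1| <= m)%N.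
  move=> b1 b1B'; have b1B : b1 \in B by move: b1B'; rewrite in_fsetD => /andP [].
  apply: leq_trans (hm b1 b1B); apply: fsubset_leq_card; apply/fsubsetP => y.
  by rewrite !in_cls in_fsetD => /andP [/andP [_ ->] ->].
have IH' := IH B' B'lt hm'.
have [C' eC] : exists C' : {fset G'}, C = [fset b + f x | x in C'].
  by apply: coset_rep => y; rewrite in_cls => /andP [_ /asboolP].
have C'n0 : C' != fset0.
  by apply/fset0Pn; move: bC; rewrite eC => /imfsetP [y yC _]; exists y.
have L := L1 P' C' p b P'n0 C'n0; rewrite -eC -/P in L.
have Cm : (#|` C| <= m)%N := hm b bB.
rewrite SU cardU_disj // cardB !natrD.
rewrite sqrtrM ?ler0n // in L.
have ss : Num.sqrt (#|` C|%:R) ^+ 2 = (#|` C|%:R : R) by rewrite sqr_sqrtr ?ler0n.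
have st : Num.sqrt (#|` C|%:R) <= Num.sqrt (m%:R : R) by rewrite ler_sqrt ?ler0n ?ler_nat.
have s0 : 0 <= Num.sqrt (#|` C|%:R : R) by rewrite sqrtr_ge0.
have q0 : 0 <= Num.sqrt (#|` P|%:R : R) by rewrite sqrtr_ge0.
have b0 := beta_ge0.
move: L IH' ss st s0 q0 b0.
set s := Num.sqrt (#|` C|%:R); set t := Num.sqrt (m%:R); set q := Num.sqrt (#|` P|%:R).
set S1 := (#|` _|%:R); set S2 := (#|` _|%:R).
move=> L IH' ss st s0 q0 b0.
rewrite -ss expr2.
have h1 : b' * q * (s * s) <= t * S1.
  have h2 : b' * q * s * s <= b' * q * s * t by rewrite ler_wpM2l // !mulr_ge0.
  rewrite mulrA (le_trans h2) // [t * S1]mulrC ler_wpM2r //.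
  by apply: le_trans (sqrtr_ge0 _) st.
  by rewrite -mulrA.
by rewrite mulrDr mulrDr lerD.
Qed.

Lemma cls_sub B b : cls B b `<=` B.
Proof. by apply/fsubsetP => y; rewrite in_cls => /andP []. Qed.

Lemma cls_rep B b : b \in B -> exists2 P' : {fset G'}, P' != fset0 &
  cls B b = [fset b + f x | x in P'].
Proof.
move=> bB.
have [P' eP] : exists P' : {fset G'}, cls B b = [fset b + f x | x in P'].
  by apply: coset_rep => y; rewrite in_cls => /andP [_ /asboolP].
exists P' => //.
have bC : b \in cls B b by rewrite in_cls bB subrr; apply/asboolP; exact: inH0.
by apply/fset0Pn; move: bC; rewrite eP => /imfsetP [y yC _]; exists y.
Qed.

Lemma cls_pos B b : b \in B -> (0 < #|` cls B b|)%N.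
Proof.
move=> bB; rewrite lt0n cardfs_eq0; apply/fset0Pn; exists b.
by rewrite in_cls bB subrr; apply/asboolP; exact: inH0.
Qed.

Lemma L2 (A B : {fset G}) : A != fset0 -> B != fset0 ->
  b' <= (#|` sumset (sumset A B) fU|)%:R / Num.sqrt ((#|` A|)%:R * (#|` B|)%:R).
Proof.
move=> An0 Bn0.
have [a0 a0A ha] := @exists_max _ (fun a => #|` cls A a|) A An0.
have [b0 b0B hb] := @exists_max _ (fun b => #|` cls B b|) B Bn0.
have [P' P'n0 eP] := cls_rep A a0 a0A.
have [Q' Q'n0 eQ] := cls_rep B b0 b0B.
have h1 := Lind P' a0 _ P'n0 (cls_pos B b0 b0B) _ B (leqnn #|` B|) hb.
have h2 := Lind Q' b0 _ Q'n0 (cls_pos A a0 a0A) _ A (leqnn #|` A|) ha.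
rewrite -eP in h1; rewrite -eQ in h2.
have s1 : (#|` sumset (sumset (cls A a0) B) fU| <= #|` sumset (sumset A B) fU|)%N.
  by apply: fsubset_leq_card; apply: sumsetS => //; apply: sumsetS => //; exact: cls_sub.
have s2 : (#|` sumset (sumset (cls B b0) A) fU| <= #|` sumset (sumset A B) fU|)%N.
  apply: fsubset_leq_card; apply: sumsetS => //; rewrite sumsetC.
  by apply: sumsetS => //; exact: cls_sub.
have hA : (0 < #|` A|)%N by rewrite lt0n cardfs_eq0.
have hB : (0 < #|` B|)%N by rewrite lt0n cardfs_eq0.
have sp : 0 < Num.sqrt ((#|` A|)%:R * (#|` B|)%:R :> R).
  by rewrite sqrtr_gt0 mulr_gt0 // ltr0n.
have rr : Num.sqrt ((#|` A|)%:R * (#|` B|)%:R :> R) ^+ 2 = (#|` A|)%:R * (#|` B|)%:R.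
  by rewrite sqr_sqrtr // mulr_ge0.
have x0 : 0 < Num.sqrt (#|` cls A a0|%:R : R) by rewrite sqrtr_gt0 ltr0n (cls_pos _ _ a0A).
have y0 : 0 < Num.sqrt (#|` cls B b0|%:R : R) by rewrite sqrtr_gt0 ltr0n (cls_pos _ _ b0B).
rewrite ler_pdivlMr //.
have b0' := beta_ge0.
have s1r : (#|` sumset (sumset (cls A a0) B) fU|%:R : R) <= (#|` sumset (sumset A B) fU|%:R) by rewrite ler_nat.
have s2r : (#|` sumset (sumset (cls B b0) A) fU|%:R : R) <= (#|` sumset (sumset A B) fU|%:R) by rewrite ler_nat.
clear s1 s2.
move: h1 h2 s1r s2r rr sp x0 y0 b0'.
set x := Num.sqrt (#|` cls A a0|%:R); set y := Num.sqrt (#|` cls B b0|%:R).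
set r := Num.sqrt _.
set S := (#|` sumset (sumset A B) fU|%:R).
set S1 := (#|` sumset (sumset (cls A a0) B) fU|%:R); set S2 := (#|` sumset (sumset (cls B b0) A) fU|%:R).
set al := (#|` A|%:R); set be := (#|` B|%:R).
move=> h1 h2 s1 s2 rr sp x0 y0 b0'.
have k1 : b' * x * be <= y * S by apply: (le_trans h1); rewrite ler_wpM2l // ltW.
have k2 : b' * y * al <= x * S by apply: (le_trans h2); rewrite ler_wpM2l // ltW.
have al0 : 0 <= al by rewrite ler0n.
have be0 : 0 <= be by rewrite ler0n.
have S0 : 0 <= S by rewrite ler0n.
have k3 : (x * y) * (b' ^+ 2 * (al * be)) <= (x * y) * S ^+ 2.
  have e1 : (x * y) * (b' ^+ 2 * (al * be)) = (b' * x * be) * (b' * y * al) by ring.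
  have e2 : (x * y) * S ^+ 2 = (y * S) * (x * S) by ring.
  rewrite e1 e2; apply: ler_pM => //.
    by rewrite !mulr_ge0 // ltW.
  by rewrite !mulr_ge0 // ltW.
rewrite ler_pM2l ?mulr_gt0 // -rr in k3.
nra.
Qed.
End Main.

Lemma imf0 (G G' : zmodType) (f : G' -> G) (A : {fset G'}) :
  [fset 0 + f x | x in A] = [fset f x | x in A].
Proof. by apply: eq_imfset => // x; rewrite add0r. Qed.

Theorem mainTheorem5 (R : realType) (G G' : zmodType) (f : G' -> G)
  (f_add : forall x y : G', f (x + y) = f x + f y) (f_inj : injective f)
  (U : {fset G'}) :
  beta R [fset f u | u in U] = beta R U.
Proof.
apply/eqP; rewrite eq_le; apply/andP; split.
  rewrite [X in _ <= X]/beta; apply: lb_le_inf; first exact: ratios_n0.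
  move=> y [A' [B' [A'n0 B'n0 ->]]].
  rewrite /beta; apply: (ge_inf (ratios_lb _ _ _)).
  exists [fset f x | x in A'], [fset f x | x in B']; split.
  - have [a aA] := fset0Pn _ A'n0; apply/fset0Pn; exists (f a); exact: in_imfset.
  - have [a aA] := fset0Pn _ B'n0; apply/fset0Pn; exists (f a); exact: in_imfset.
  - by rewrite -(imf0 _ _ f A') -(imf0 _ _ f B') (card_shift _ _ _ f_add f_inj) !(card_tr _ _ _ f_inj).
rewrite [X in _ <= X]/beta; apply: lb_le_inf; first exact: ratios_n0.
move=> y [A [B [An0 Bn0 ->]]]; exact: L2.
Qed.
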